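(* Let $(E,\rho)$ be a weighted space and $P:\mathscr{B}^\rho(E)\to\mathscr{B}^\rho(E)$ a map. Then $P$ is a smooth operator algebra homomorphism if and only if there is a map $\psi:E\to E$ such that the restriction $\psi|_{K_R}:K_R\to E$ is continuous for every $R>0$, $\sup_{x\in E}\rho(\psi(x))/\rho(x)<\infty$, and $Pf=f\circ\psi$ for all $f\in\mathscr{B}^\rho(E)$. The map $\psi$ is uniquely determined by $P$.
   Context: A weighted space is a pair $(E,\rho)$ where $E$ is a completely regular Hausdorff topological space and $\rho:E\to(0,\infty)$ is an admissible weight function, meaning that for every $R\ge 0$ the sublevel set $K_R:=\{x\in E:\rho(x)\le R\}$ is compact. For $f:E\to\mathbb{R}$ put $\|f\|_\rho:=\sup_{x\in E}|f(x)|/\rho(x)$; $\mathscr{B}^\rho(E)$ denotes the closure of $C_b(E)$ with respect to $\|\cdot\|_\rho$ inside $\{f:E\to\mathbb{R}:\|f\|_\rho<\infty\}$. A continuous linear map $P:\mathscr{B}^\rho(E)\to\mathscr{B}^\rho(E)$ is a smooth operator algebra homomorphism if for every $n$, every bounded smooth $\phi:\mathbb{R}^n\to\mathbb{R}$ and all $f_1,\dots,f_n\in\mathscr{B}^\rho(E)$ one has $P(\phi(f_1(\cdot),\dots,f_n(\cdot)))=\phi(Pf_1(\cdot),\dots,Pf_n(\cdot))$. *)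

(* Defs.v *)
From HB Require Import structures.
From mathcomp Require Import all_boot all_order all_algebra.
From mathcomp Require Import all_classical all_reals all_analysis.
Set Implicit Arguments. Unset Strict Implicit. Unset Printing Implicit Defensive.
Import Order.TTheory GRing.Theory Num.Theory.
Import numFieldNormedType.Exports.
Local Open Scope classical_set_scope.
Local Open Scope ring_scope.

Section Weighted.
Variables (R : realType) (E : topologicalType).

Definition sublevel (rho : E -> R) (r : R) : set E := [set x | rho x <= r].

Definition admissible_weight (rho : E -> R) : Prop :=
  (forall x, 0 < rho x) /\ (forall r : R, 0 <= r -> compact (sublevel rho r)).

Definition weighted_space (rho : E -> R) : Prop :=
  completely_regular_space E /\ hausdorff_space E /\ admissible_weight rho.

Definition wbounded (rho : E -> R) (f : E -> R) : Prop :=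
  has_ubound (range (fun x => `|f x| / rho x)).

Definition wnorm (rho : E -> R) (f : E -> R) : R :=
  sup (range (fun x => `|f x| / rho x)).

Definition Cb (g : E -> R) : Prop :=
  continuous g /\ exists M : R, forall x, `|g x| <= M.

(* B^rho(E): closure of C_b(E) (within the functions of finite rho-norm)
   w.r.t. ||.||_rho *)
Definition Brho (rho : E -> R) (f : E -> R) : Prop :=
  wbounded rho f /\
  forall eps : R, 0 < eps ->
    exists g : E -> R, Cb g /\ wbounded rho g /\ wnorm rho (f \- g) < eps.

(* P : B^rho -> B^rho continuous linear (P given as a map on all functions;
   only its values on B^rho matter) *)
Definition cont_linear_on_Brho (rho : E -> R) (P : (E -> R) -> (E -> R)) : Prop :=
  (forall f, Brho rho f -> Brho rho (P f)) /\
  (forall (a : R) f g, Brho rho f -> Brho rho g ->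
     P (fun x => a * f x + g x) = (fun x => a * P f x + P g x)) /\
  (forall f, Brho rho f -> forall eps : R, 0 < eps ->
     exists2 delta : R, 0 < delta &
       forall g, Brho rho g -> wnorm rho (f \- g) < delta ->
         wnorm rho (P f \- P g) < eps).

End Weighted.

Fixpoint Ck (R : realType) (n k : nat) (phi : 'rV[R]_n -> R) : Prop :=
  match k with
  | 0 => continuous phi
  | k.+1 => (forall x, differentiable phi x) /\
            (forall v : 'rV[R]_n, Ck k (fun x => 'D_v phi x))
  end.

Definition smooth_fun (R : realType) (n : nat) (phi : 'rV[R]_n -> R) : Prop :=
  forall k, Ck k phi.

Definition bounded_fun (R : realType) (n : nat) (phi : 'rV[R]_n -> R) : Prop :=
  exists M : R, forall x, `|phi x| <= M.

Definition smooth_op_alg_hom (R : realType) (E : topologicalType)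
    (rho : E -> R) (P : (E -> R) -> (E -> R)) : Prop :=
  cont_linear_on_Brho rho P /\
  forall (n : nat) (phi : 'rV[R]_n -> R), smooth_fun phi -> bounded_fun phi ->
  forall fs : 'I_n -> (E -> R), (forall i, Brho rho (fs i)) ->
    P (fun x => phi (\row_i fs i x)) = (fun x => phi (\row_i P (fs i) x)).

Definition represents (R : realType) (E : topologicalType)
    (rho : E -> R) (P : (E -> R) -> (E -> R)) (psi : E -> E) : Prop :=
  (forall r : R, 0 < r -> {within sublevel rho r, continuous psi}) /\
  has_ubound (range (fun x => rho (psi x) / rho x)) /\
  (forall f, Brho rho f -> P f = f \o psi).

(* Main.v *)
Require Import Defs.
From HB Require Import structures.
From mathcomp Require Import all_boot all_order all_algebra.
From mathcomp Require Import all_classical all_reals all_analysis.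
From mathcomp Require Import ring lra.
Set Implicit Arguments. Unset Strict Implicit. Unset Printing Implicit Defensive.
Import Order.TTheory GRing.Theory Num.Theory.
Import numFieldNormedType.Exports.
Local Open Scope classical_set_scope.
Local Open Scope ring_scope.

Section Smooth.
Variables (R : realType) (n : nat).
Implicit Types f g : 'rV[R]_n -> R.

Lemma CkS k f : Ck k.+1 f -> Ck k f.
Proof.
elim: k f => [|k IH] f /= [df Hd].
  by move=> x; apply: differentiable_continuous.
by split => // v; apply: IH.
Qed.

Lemma Ck_cst k (c : R) : Ck k (fun _ : 'rV[R]_n => c).
Proof.
elim: k c => [|k IH] c /=; first exact: cst_continuous.
split => [x|v]; first exact: (differentiable_cst c x).
have -> : (fun x => 'D_v (fun _ : 'rV[R]_n => c) x) = (fun _ => 0).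
  by apply/funext => x; rewrite derive_cst.
exact: IH.
Qed.

Lemma Ck_add k f g : Ck k f -> Ck k g -> Ck k (fun x => f x + g x).
Proof.
elim: k f g => [|k IH] f g /=.
  by move=> cf cg x; apply: (continuousD (cf x) (cg x)).
move=> [df Hf] [dg Hg]; split => [x|v].
  exact: (differentiableD (df x) (dg x)).
have -> : (fun x => 'D_v (fun x0 => f x0 + g x0) x) =
    (fun x => 'D_v f x + 'D_v g x).
  apply/funext => x.
  by rewrite (deriveD (@diff_derivable _ _ _ f x v (df x)) (@diff_derivable _ _ _ g x v (dg x))).
exact: IH.
Qed.

Lemma Ck_mul k f g : Ck k f -> Ck k g -> Ck k (fun x => f x * g x).
Proof.
elim: k f g => [|k IH] f g /=.
  by move=> cf cg x; apply: (continuousM (cf x) (cg x)).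
move=> [df Hf] [dg Hg]; split => [x|v].
  exact: (differentiableM (df x) (dg x)).
have -> : (fun x => 'D_v (fun x0 => f x0 * g x0) x) =
    (fun x => f x * 'D_v g x + g x * 'D_v f x).
  apply/funext => x.
  by rewrite (deriveM (@diff_derivable _ _ _ f x v (df x)) (@diff_derivable _ _ _ g x v (dg x))).
apply: Ck_add; apply: IH => //.
- exact: (@CkS k f (conj df Hf)).
- exact: (@CkS k g (conj dg Hg)).
Qed.

Lemma Ck_coord k (i : 'I_n) : Ck k (fun x : 'rV[R]_n => x ord0 i).
Proof.
case: k => [|k] /=.
  move=> x; exact: (differentiable_continuous (differentiable_coord x ord0 i)).
split => [x|v]; first exact: differentiable_coord.
have -> : (fun x => 'D_v (fun x0 : 'rV[R]_n => x0 ord0 i) x) = (fun _ => v ord0 i).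
  apply/funext => x; rewrite deriveE; last exact: differentiable_coord.
  have @f : {linear 'rV[R]_n -> R}.
    by exists (fun N : 'rV[R]_n => N ord0 i); do 2![eexists]; do ?[constructor];
     rewrite ?mxE// => ? *; rewrite ?mxE//; move=> ?; rewrite !mxE.
  rewrite (_ : (fun _ => _) = f) //.
  by rewrite diff_lin //; apply: coord_continuous.
exact: Ck_cst.
Qed.

Lemma Ck_cos_sin k f : Ck k f -> Ck k (fun x => cos (f x)) /\ Ck k (fun x => sin (f x)).
Proof.
elim: k f => [|k IH] f /=.
  move=> cf; split => x.
    exact: (continuous_comp (cf x) (@continuous_cos R (f x))).
  exact: (continuous_comp (cf x) (@continuous_sin R (f x))).
move=> [df Hf].
have dcos y : differentiable (@cos R) y.
  apply/derivable1_diffP; have := is_derive_cos y; by case.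
have dsin y : differentiable (@sin R) y.
  apply/derivable1_diffP; have := is_derive_sin y; by case.
have Hk : Ck k f by apply: (@CkS k f); split.
have [IHc IHs] := IH f Hk.
split; split => [x|v].
- exact: (differentiable_comp (df x) (dcos (f x))).
- have -> : (fun x => 'D_v (fun x0 => cos (f x0)) x) =
      (fun x => (- sin (f x)) * 'D_v f x).
    apply/funext => x.
    rewrite (deriveE v (differentiable_comp (df x) (dcos (f x)))).
    rewrite (diff_comp (df x) (dcos (f x))) /= diff1E; last exact: dcos.
    rewrite derive1E (@derive_val _ _ _ _ _ _ _ (is_derive_cos (f x))) -deriveE //.
    by rewrite mulrC.
  apply: Ck_mul => //.
  have -> : (fun x => - sin (f x)) = (fun x => (-1) * sin (f x)).
    by apply/funext => x; rewrite mulN1r.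
  exact: Ck_mul (Ck_cst _ _) IHs.
- exact: (differentiable_comp (df x) (dsin (f x))).
- have -> : (fun x => 'D_v (fun x0 => sin (f x0)) x) =
      (fun x => cos (f x) * 'D_v f x).
    apply/funext => x.
    rewrite (deriveE v (differentiable_comp (df x) (dsin (f x)))).
    rewrite (diff_comp (df x) (dsin (f x))) /= diff1E; last exact: dsin.
    rewrite derive1E (@derive_val _ _ _ _ _ _ _ (is_derive_sin (f x))) -deriveE //.
    by rewrite mulrC.
  exact: Ck_mul.
Qed.

Lemma Ck_prod k N (F : 'I_N -> 'rV[R]_n -> R) :
  (forall i, Ck k (F i)) -> Ck k (fun t => \prod_(i < N) F i t).
Proof.
elim: N F => [|N IH] F HF.
  have -> : (fun t => \prod_(i < 0) F i t) = (fun _ => 1).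
    by apply/funext => t; rewrite big_ord0.
  exact: Ck_cst.
have -> : (fun t => \prod_(i < N.+1) F i t) =
    (fun t => (\prod_(i < N) F (widen_ord (leqnSn N) i) t) * F ord_max t).
  by apply/funext => t; rewrite big_ord_recr.
by apply: Ck_mul; [apply: IH => i; apply: HF | apply: HF].
Qed.

Lemma Ck_cosfac k (i : 'I_n) (c a : R) : Ck k (fun t : 'rV[R]_n => cos (c * (t ord0 i - a)) ^+ 2).
Proof.
have Hl : Ck k (fun t : 'rV[R]_n => c * (t ord0 i - a)).
  have -> : (fun t : 'rV[R]_n => c * (t ord0 i - a)) = (fun t => c * t ord0 i + (- (c * a))).
    by apply/funext => t; rewrite mulrBr.
  by apply: Ck_add; [apply: Ck_mul; [apply: Ck_cst | apply: Ck_coord] | apply: Ck_cst].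
have [Hc _] := Ck_cos_sin Hl.
have -> : (fun t : 'rV[R]_n => cos (c * (t ord0 i - a)) ^+ 2) =
   (fun t => cos (c * (t ord0 i - a)) * cos (c * (t ord0 i - a))) by apply/funext => t; rewrite expr2.
exact: Ck_mul.
Qed.
End Smooth.

Section RV.
Variables (R : realType) (n : nat).

Lemma rv_ballP (s t : 'rV[R]_n) e : 0 < e ->
  (forall i, `|s ord0 i - t ord0 i| < e) -> ball s e t.
Proof.
move=> e0 H; split => // i j; rewrite (ord1 i) -ball_normE /=; exact: H.
Qed.

Lemma rv_ball_coord (s t : 'rV[R]_n) e : ball s e t ->
  forall i, `|s ord0 i - t ord0 i| < e.
Proof. by move=> [_ H] i; have := H ord0 i; rewrite -ball_normE. Qed.

Lemma row_cont (E : topologicalType) (gs : 'I_n -> E -> R) : (forall i, continuous (gs i)) ->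
  continuous (fun x => \row_i gs i x : 'rV[R]_n).
Proof.
move=> cg x U /nbhs_ballP [e e0 HU].
have : \forall y \near x, forall i, ball (gs i x) e (gs i y).
  apply: filter_forall => i; apply: (cg i x); exact: nbhsx_ballx.
apply: filterS => y Hy; apply: HU; apply: rv_ballP => // i.
by rewrite !mxE; have := Hy i; rewrite -ball_normE.
Qed.

Lemma unif_cont (phi : 'rV[R]_n -> R) (S : set 'rV[R]_n) (e : R) :
  continuous phi -> compact S -> 0 < e ->
  exists2 eta, 0 < eta & forall s t : 'rV[R]_n, S s -> (forall i, `|s ord0 i - t ord0 i| < eta) ->
     `|phi s - phi t| < e.
Proof.
move=> cphi /compact_near_coveringP cS e0.
have H : \forall eta \near (0:R)^'+, S `<=` (fun s => forall t : 'rV[R]_n,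
    (forall i, `|s ord0 i - t ord0 i| < eta) -> `|phi s - phi t| < e).
  apply: (cS R (0:R)^'+) => s0 _.
  have e2 : 0 < e / 2 by rewrite divr_gt0.
  have : nbhs s0 (phi @^-1` ball (phi s0) (e / 2)) by apply: (cphi s0); exact: nbhsx_ballx.
  move=> /nbhs_ballP [d d0 Hd].
  have d2 : 0 < d / 2 by rewrite divr_gt0.
  exists (ball s0 (d / 2), [set eta | eta < d / 2]) => /=.
    by split; [exact: nbhsx_ballx | exact: nbhs_right_lt].
  move=> [s eta] /= [bs he] t Ht.
  have bs' : ball s0 d s by apply: (le_ball _ bs); rewrite ler_pdivrMr // ler_peMr ?ltW //; lra.
  have bt : ball s0 d t.
    apply: rv_ballP => // i; have := rv_ball_coord bs i.
    have := Ht i => h1 h2.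
    have -> : s0 ord0 i - t ord0 i = (s0 ord0 i - s ord0 i) + (s ord0 i - t ord0 i) by ring.
    apply: le_lt_trans (ler_normD _ _) _.
    have -> : d = d / 2 + d / 2 by rewrite -splitr.
    by apply: ltrD => //; apply: lt_trans h1 he.
  have := Hd _ bs'; have := Hd _ bt; rewrite /= -!ball_normE /= => h1 h2.
  have -> : phi s - phi t = (phi s0 - phi t) - (phi s0 - phi s) by ring.
  apply: le_lt_trans (ler_normB _ _) _.
  have -> : e = e / 2 + e / 2 by rewrite -splitr.
  exact: ltrD.
have [eta [He eta0]] := filter_ex (filterI H (nbhs_right_gt 0)).
by exists eta => // s t Ss; apply: He.
Qed.
End RV.

Section Main.
Variables (R : realType) (E : topologicalType) (rho : E -> R).
Hypothesis hw : weighted_space rho.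
Implicit Types (f g : E -> R) (a : R).

Lemma rpos x : 0 < rho x. Proof. by case: hw => _ [_ [+ _]]; apply. Qed.
Lemma hH : hausdorff_space E. Proof. by case: hw => _ []. Qed.
Lemma hcr : completely_regular_space E. Proof. by case: hw. Qed.
Lemma Kcpt r : 0 <= r -> compact (sublevel rho r). Proof. by case: hw => _ [_ [_ +]]; apply. Qed.

Lemma wnorm_ub f x : wbounded rho f -> `|f x| / rho x <= wnorm rho f.
Proof. by move=> hb; apply: ub_le_sup => //; exists x. Qed.

Lemma wnorm_pt f x : wbounded rho f -> `|f x| <= wnorm rho f * rho x.
Proof. by move=> hb; rewrite -ler_pdivrMr ?rpos //; apply: wnorm_ub. Qed.

Lemma wnorm_le f c : 0 <= c -> (forall x, `|f x| / rho x <= c) -> wnorm rho f <= c.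
Proof.
move=> c0 H; rewrite /wnorm.
have [[x _]|nE] := pselect (exists x : E, True).
  apply: ge_sup; first by exists (`|f x| / rho x); exists x.
  by move=> _ [y _ <-].
have -> : range (fun x => `|f x| / rho x) = set0.
  by apply/seteqP; split => // z [y _ yz]; exfalso; apply: nE; exists y.
by rewrite sup0.
Qed.

Lemma wnorm_ge0 f : wbounded rho f -> 0 <= wnorm rho f.
Proof.
move=> hb; have [[x _]|nE] := pselect (exists x : E, True).
  by apply: le_trans (wnorm_ub x hb); rewrite divr_ge0 // ltW // rpos.
have -> : wnorm rho f = sup set0.
  rewrite /wnorm; congr sup.
  by apply/seteqP; split => // z [y _ yz]; exfalso; apply: nE; exists y.
by rewrite sup0.
Qed.

Lemma wb_of f c : (forall x, `|f x| / rho x <= c) -> wbounded rho f.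
Proof. by move=> H; exists c => _ [x _ <-]. Qed.

Lemma wb_pt f c : (forall x, `|f x| <= c * rho x) -> wbounded rho f.
Proof. by move=> H; apply: (@wb_of f c) => x; rewrite ler_pdivrMr ?rpos. Qed.

Lemma lsc r x : 0 <= r -> r < rho x -> \forall y \near x, r < rho y.
Proof.
move=> r0 rx.
have cl : closed (sublevel rho r) by apply: compact_closed; [exact: hH | exact: Kcpt].
have : nbhs x (~` sublevel rho r).
  apply: open_nbhs_nbhs; split; first exact: closed_openC.
  by apply/negP; rewrite -ltNge.
by apply: filterS => y /negP; rewrite -ltNge.
Qed.

Lemma rho_inf : exists2 m, 0 < m & forall x, m <= rho x.
Proof.
have /compact_near_coveringP cK := @Kcpt 1 ler01.
have H : \forall e \near (0:R)^'+, sublevel rho 1 `<=` (fun x => e < rho x).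
  apply: (cK R (0:R)^'+ (fun e x => e < rho x)) => x _.
  have hx := rpos x.
  exists ([set y | rho x / 2 < rho y], [set e | e < rho x / 2]) => /=.
    split; first by apply: lsc; rewrite ?divr_ge0 ?ltW// ltr_pdivrMr// ltr_pMr// ltr1n.
    by apply: nbhs_right_lt; rewrite divr_gt0.
  by move=> [y e] /= [hy he]; apply: lt_trans hy.
have [e [He e0]] := filter_ex (filterI H (nbhs_right_gt 0)).
exists (Num.min e 1); first by rewrite lt_min e0 ltr01.
move=> x; have [x1|x1] := leP (rho x) 1.
  by rewrite ge_min (ltW (He x x1)).
by rewrite ge_min (ltW x1) orbT.
Qed.

Lemma wb_lin a f g : wbounded rho f -> wbounded rho g ->
  wbounded rho (fun x => a * f x + g x).
Proof.
move=> hf hg; apply: (@wb_pt _ (`|a| * wnorm rho f + wnorm rho g)) => x.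
rewrite mulrDl; apply: (le_trans (ler_normD _ _)); rewrite normrM -mulrA.
apply: lerD; last exact: wnorm_pt.
by apply: ler_wpM2l => //; exact: wnorm_pt.
Qed.

Lemma wb_sub f g : wbounded rho f -> wbounded rho g -> wbounded rho (f \- g).
Proof.
move=> hf hg; have := wb_lin (-1) hg hf.
by move=> [c Hc]; exists c => _ [x _ <-]; apply: Hc; exists x => //=; rewrite mulN1r addrC.
Qed.

Lemma Cb_lin a f g : Cb f -> Cb g -> Cb (fun x => a * f x + g x).
Proof.
move=> [cf [M1 H1]] [cg [M2 H2]]; split.
  move=> x; apply: (@continuousD _ _ _ (fun x => a * f x) g x); last exact: cg.
  by apply: (@continuousM _ _ (fun=> a) f x); [exact: cst_continuous | exact: cf].
exists (`|a| * M1 + M2) => x; apply: (le_trans (ler_normD _ _)); rewrite normrM.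
by apply: lerD => //; apply: ler_wpM2l.
Qed.

Lemma Cb_wb g : Cb g -> wbounded rho g.
Proof.
move=> [_ [M HM]]; have [m m0 Hm] := rho_inf.
apply: (@wb_pt _ (M / m)) => x.
have M0 : 0 <= M := le_trans (normr_ge0 _) (HM x).
apply: (le_trans (HM x)); rewrite -mulrA ler_peMr //.
by rewrite ler_pdivlMl // mulr1 Hm.
Qed.

Lemma wnorm0 f : (forall x, f x = 0) -> wnorm rho f <= 0.
Proof. by move=> H; apply: wnorm_le => // x; rewrite H normr0 mul0r. Qed.

Lemma Cb_Brho g : Cb g -> Brho rho g.
Proof.
move=> cg; split; first exact: Cb_wb.
move=> eps e0; exists g; split => //; split; first exact: Cb_wb.
by apply: le_lt_trans e0; apply: wnorm0 => x; rewrite /= subrr.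
Qed.

Lemma Brho_lin a f g : Brho rho f -> Brho rho g -> Brho rho (fun x => a * f x + g x).
Proof.
move=> [wf Af] [wg Ag]; split; first exact: wb_lin.
move=> eps e0.
have a1 : 0 < `|a| + 1 by rewrite ltr_wpDl.
have [f0 [cf0 [wf0 hf0]]] := Af (eps / (2 * (`|a| + 1))) (divr_gt0 e0 (mulr_gt0 (ltr0Sn _ 1) a1)).
have [g0 [cg0 [wg0 hg0]]] := Ag (eps / 2) (divr_gt0 e0 (ltr0Sn _ 1)).
exists (fun x => a * f0 x + g0 x); split; first exact: Cb_lin.
split; first exact: wb_lin.
set e1 := wnorm rho (f \- f0) in hf0; set e2 := wnorm rho (g \- g0) in hg0.
have e10 : 0 <= e1 by apply: wnorm_ge0; apply: wb_sub.
apply: (@le_lt_trans _ _ (`|a| * e1 + e2)).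
  apply: wnorm_le; first by apply: addr_ge0; [apply: mulr_ge0|apply: wnorm_ge0; apply: wb_sub].
  move=> x; rewrite ler_pdivrMr ?rpos //=.
  have -> : a * f x + g x - (a * f0 x + g0 x) = a * (f x - f0 x) + (g x - g0 x) by ring.
  apply: (le_trans (ler_normD _ _)); rewrite normrM mulrDl -mulrA.
  apply: lerD; last exact: (wnorm_pt x (wb_sub wg wg0)).
  by apply: ler_wpM2l => //; exact: (wnorm_pt x (wb_sub wf wf0)).
have : `|a| * e1 <= (`|a| + 1) * e1 by apply: ler_wpM2r => //; rewrite lerDl.
have : (`|a| + 1) * e1 < eps / 2.
    move: hf0; rewrite ltr_pdivlMr; last by rewrite mulr_gt0 // (ltr0Sn _ 1).
    move=> h; rewrite ltr_pdivlMr ?(ltr0Sn _ 1) //; apply: le_lt_trans h; rewrite le_eqVlt; apply/orP; left; apply/eqP; ring.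
move=> h1 h2.
have -> : eps = eps / 2 + eps / 2 by rewrite -splitr.
by apply: ltrD => //; apply: le_lt_trans h2 h1.
Qed.


Lemma Brho_cont f r : Brho rho f -> 0 < r -> {within sublevel rho r, continuous f}.
Proof.
move=> [wf Af] r0; apply/subspace_continuousP => x Kx.
apply/cvgrPdist_lt => e e0.
have e3 : 0 < e / 3 by rewrite divr_gt0 // (ltr0Sn _ 2).
have [g [[cg _] [wg hg]]] := Af (e / 3 / r) (divr_gt0 e3 r0).
have Hg := (@cvgrPdist_lt _ _ _ (nbhs x) _ g (g x)).1 (cg x) _ e3.
rewrite near_withinE; near=> y => Ky.
have Hy : `|g x - g y| < e / 3 by near: y; exact: Hg.
rewrite /from_subspace.
have bnd z : sublevel rho r z -> `|f z - g z| <= e / 3.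
  move=> Kz; apply: le_trans (wnorm_pt z (wb_sub wf wg)) _.
  have w0 := wnorm_ge0 (wb_sub wf wg).
  apply: le_trans (ler_wpM2l w0 Kz) _.
  by rewrite -ler_pdivlMr // ltW.
have -> : f x - f y = (f x - g x) + (g x - g y) + (g y - f y) by ring.
have -> : e = e / 3 + e / 3 + e / 3 by field.
apply: le_lt_trans (ler_normD _ _) _; apply: ltr_leD; last by rewrite distrC; apply: bnd.
apply: le_lt_trans (ler_normD _ _) _; apply: ler_ltD => //; exact: bnd.
Unshelve. all: by end_near.
Qed.


Lemma separate_closed (a : E) (B : set E) : closed B -> ~ B a ->
  exists u : E -> R, [/\ Cb u, u a = 0, (forall b, B b -> u b = 1) &
    (forall x, 0 <= u x <= 1)].
Proof.
move=> cB nBa; have sep := hcr cB nBa.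
exists (Urysohn [set a] B : E -> R); split.
- split; first exact: Urysohn_continuous.
  exists 1 => x.
  have /Urysohn_range : range (Urysohn [set a] B : E -> R) (Urysohn [set a] B x) by exists x.
  by rewrite /= in_itv /= => /andP [h0 h1]; rewrite ger0_norm.
- by apply: (Urysohn_sub0 sep); exists a.
- by move=> b Bb; apply: (Urysohn_sub1 sep); exists b.
- move=> x.
  have /Urysohn_range : range (Urysohn [set a] B : E -> R) (Urysohn [set a] B x) by exists x.
  by rewrite /= in_itv.
Qed.

Lemma separate (a b : E) : a <> b -> exists u : E -> R, [/\ Cb u, u a = 0 & u b = 1].
Proof.
move=> ab; have cB : closed [set b] by apply: accessible_closed_set1; apply: hausdorff_accessible; exact: hH.
have [|u [cu ua ub _]] := separate_closed cB (a:=a); first by move=> /= ba; apply: ab.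
by exists u; split => //; apply: ub.
Qed.

Lemma uniq_psi (P : (E -> R) -> (E -> R)) psi1 psi2 :
  (forall f, Brho rho f -> P f = f \o psi1) ->
  (forall f, Brho rho f -> P f = f \o psi2) -> psi1 = psi2.
Proof.
move=> H1 H2; apply/funext => x; apply: contrapT => hne.
have [u [cu ua ub]] := separate hne.
have := congr1 (fun h => h x) (etrans (esym (H1 u (Cb_Brho cu))) (H2 u (Cb_Brho cu))).
by rewrite /= ua ub => /eqP; rewrite eq_sym oner_eq0.
Qed.


Lemma Brho_comp (n : nat) (phi : 'rV[R]_n -> R) (fs : 'I_n -> E -> R) :
  continuous phi -> (exists M, forall t, `|phi t| <= M) -> (forall i, Brho rho (fs i)) ->
  Brho rho (fun x => phi (\row_i fs i x)).
Proof.
move=> cphi [M HM] Bfs.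
have M0 : 0 <= M := le_trans (normr_ge0 _) (HM 0).
have [m m0 Hm] := rho_inf.
have wbM h : (forall x, `|h x| <= M) -> wbounded rho h.
  move=> Hh; apply: (@wb_pt h (M / m)) => x; apply: le_trans (Hh x) _.
  by rewrite -mulrA ler_peMr // ler_pdivlMl // mulr1.
split; first by apply: wbM.
move=> eps e0.
set R0 := 4 * M / eps + 1.
have R00 : 0 < R0 by rewrite /R0 ltr_wpDl // divr_ge0 // ?mulr_ge0 // ltW.
set Bs := R0 * \sum_i wnorm rho (fs i) + 1.
set S := [set v : 'rV[R]_n | forall i, `[- Bs, Bs]%classic (v ord0 i)].
have cS : compact S.
  by apply: (@rV_compact _ n (fun=> `[- Bs, Bs]%classic)) => i; exact: segment_compact.
have em : 0 < eps * m / 2 by rewrite divr_gt0 // ?mulr_gt0 // (ltr0Sn _ 1).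
have [eta eta0 Heta] := unif_cont cphi cS em.
have /choice [gs Hgs] : forall i, exists g, Cb g /\ wbounded rho g /\ wnorm rho (fs i \- g) < eta / R0.
  by move=> i; apply: (Bfs i).2; rewrite divr_gt0.
exists (fun x => phi (\row_i gs i x)); split.
  split; last by exists M.
  move=> x; apply: continuous_comp; last exact: cphi.
  by apply: row_cont => i; case: (Hgs i) => -[].
split; first by apply: wbM.
have e2 : eps / 2 < eps by rewrite ltr_pdivrMr ?(ltr0Sn _ 1) // ltr_pMr // ltr1n.
apply: le_lt_trans e2; apply: wnorm_le; first by rewrite divr_ge0 // ltW.
move=> z; rewrite ler_pdivrMr ?rpos //=.
have [zK|zK] := leP (rho z) R0.
- have Ss : S (\row_i fs i z).
    move=> i; rewrite mxE /= in_itv /= -ler_norml.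
    apply: le_trans (wnorm_pt z (Bfs i).1) _.
    have wi : wnorm rho (fs i) <= \sum_j wnorm rho (fs j).
      rewrite (bigD1 i) //= lerDl sumr_ge0 // => j _; exact: wnorm_ge0 (Bfs j).1.
    have w0 := wnorm_ge0 (Bfs i).1.
    apply: le_trans (ler_wpM2l w0 zK) _.
    have : wnorm rho (fs i) * R0 <= R0 * \sum_j wnorm rho (fs j) by rewrite mulrC ler_wpM2l // ltW.
    rewrite /Bs; lra.
  have := Heta _ (\row_i gs i z) Ss.
  have Hc : forall i, `|(\row_i0 fs i0 z) ord0 i - (\row_i0 gs i0 z) ord0 i| < eta.
    move=> i; rewrite !mxE; case: (Hgs i) => _ [wg hg].
    apply: le_lt_trans (wnorm_pt z (wb_sub (Bfs i).1 wg)) _ => /=.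
    have w0 := wnorm_ge0 (wb_sub (Bfs i).1 wg).
    have h1 : wnorm rho (fs i \- gs i) * rho z < eta / R0 * rho z by rewrite ltr_pM2r ?rpos.
    have h2 : eta / R0 * rho z <= eta / R0 * R0 by rewrite ler_wpM2l // divr_ge0 // ltW.
    by rewrite divfK ?gt_eqF // in h2; apply: lt_le_trans h2.
  move=> /(_ Hc) h; apply: ltW; apply: lt_le_trans h _.
  by rewrite -mulrA (mulrC m) mulrA ler_wpM2l // ?Hm // divr_ge0 // ltW.
- have h2 : `|phi (\row_i fs i z) - phi (\row_i gs i z)| <= 2 * M.
    apply: le_trans (ler_normB _ _) _; rewrite mulr2n mulrDl mul1r.
    by apply: lerD.
  apply: le_trans h2 _.
  have -> : 2 * M = eps / 2 * R0 - eps / 2 by rewrite /R0; field; rewrite gt_eqF.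
  have : eps / 2 * R0 <= eps / 2 * rho z by rewrite ler_wpM2l // ?divr_ge0 // ltW.
  have : 0 <= eps / 2 by rewrite divr_ge0 // ltW.
  lra.
Qed.


Lemma rep_hom (P : (E -> R) -> (E -> R)) psi :
  (forall f, Brho rho f -> Brho rho (P f)) -> represents rho P psi -> smooth_op_alg_hom rho P.
Proof.
move=> PB [_ [[C HC] Hrep]].
split.
  split; first exact: PB.
  split.
    move=> a f g Bf Bg; rewrite !Hrep //; last exact: Brho_lin.
  move=> f Bf eps e0.
  have C1 : 0 < `|C| + 1 by rewrite ltr_wpDl.
  exists (eps / (`|C| + 1)); first by rewrite divr_gt0.
  move=> g Bg hfg; rewrite !Hrep //.
  have wfg := wb_sub Bf.1 Bg.1.
  have w0 := wnorm_ge0 wfg.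
  apply: (@le_lt_trans _ _ (wnorm rho (f \- g) * `|C|)).
    apply: wnorm_le; first by rewrite mulr_ge0.
    move=> x /=.
    have hx : rho (psi x) / rho x <= `|C| by apply: le_trans (HC _ (ex_intro2 _ _ x I erefl)) (ler_norm _).
    apply: le_trans (_ : wnorm rho (f \- g) * rho (psi x) / rho x <= _).
      by rewrite ler_pdivrMr ?rpos // divfK ?gt_eqF ?rpos // (wnorm_pt (psi x) wfg).
    by rewrite -mulrA ler_wpM2l.
  have h1 : wnorm rho (f \- g) * `|C| <= wnorm rho (f \- g) * (`|C| + 1) by rewrite ler_wpM2l // lerDl.
  apply: le_lt_trans h1 _; by rewrite -ltr_pdivlMr.
move=> n phi sphi bphi fs Bfs.
have Bc := Brho_comp (sphi 0%N) bphi Bfs.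
rewrite Hrep //; apply/funext => x /=; congr phi; apply/rowP => i; rewrite !mxE Hrep //.
Qed.


Lemma cont_fac (c a : R) : continuous (fun t : R => cos (c * (t - a)) ^+ 2).
Proof.
have -> : (fun t : R => cos (c * (t - a)) ^+ 2) = (fun t => cos (c * (t - a)) * cos (c * (t - a))).
  by apply/funext => t; rewrite expr2.
have hc : continuous (fun t : R => cos (c * (t - a))).
  move=> t; apply: (@continuous_comp _ _ _ (fun t => c * (t - a)) cos t); last exact: continuous_cos.
  apply: (@continuousM _ _ (fun=> c) (fun t => t - a)); first exact: cst_continuous.
  apply: (@continuousB _ _ _ id (fun=> a)); [exact: cvg_id | exact: cst_continuous].
by move=> t; apply: (@continuousM _ _ (fun t => cos (c * (t - a))) (fun t => cos (c * (t - a)))); apply: hc.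
Qed.

Lemma Brho0 : Brho rho (fun _ : E => 0).
Proof. by apply: Cb_Brho; split; [exact: cst_continuous | exists 0 => x; rewrite normr0]. Qed.

Section Forward.
Variable P : (E -> R) -> (E -> R).
Hypothesis PB : forall f, Brho rho f -> Brho rho (P f).
Hypothesis Ph : smooth_op_alg_hom rho P.

Lemma Plin a f g : Brho rho f -> Brho rho g ->
  P (fun x => a * f x + g x) = (fun x => a * P f x + P g x).
Proof. by case: Ph => -[_ [+ _]] _; apply. Qed.

Lemma P0 : P (fun _ => 0) = (fun _ => 0).
Proof.
have := Plin 1 Brho0 Brho0.
have -> : (fun x : E => 1 * 0 + 0 : R) = (fun _ => 0) by apply/funext => x; rewrite mul1r addr0.
move=> H; apply/funext => x; have := congr1 (fun h => h x) H => /= h; lra.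
Qed.

Lemma Brho_scale a f : Brho rho f -> Brho rho (fun x => a * f x).
Proof.
move=> Bf; have := Brho_lin a Bf Brho0.
by have -> : (fun x => a * f x + 0) = (fun x => a * f x) by apply/funext => x; rewrite addr0.
Qed.

Lemma PZ a f : Brho rho f -> P (fun x => a * f x) = (fun x => a * P f x).
Proof.
move=> Bf; have := Plin a Bf Brho0; rewrite P0.
have -> : (fun x => a * f x + 0) = (fun x => a * f x) by apply/funext => x; rewrite addr0.
by move=> ->; apply/funext => x; rewrite addr0.
Qed.

Lemma Pbound : exists2 A, 0 < A & forall h b, Brho rho h -> 0 < b ->
  (forall y, `|h y| <= b * rho y) -> forall x, `|P h x| <= A * b * rho x.
Proof.
case: Ph => -[_ [_ Pc]] _.
have [d d0 Hd] := Pc _ Brho0 1 ltr01.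
exists (2 / d) => [|h b Bh b0 Hh x]; first by rewrite divr_gt0 // (ltr0Sn _ 1).
set s := d / (2 * b).
have s0 : 0 < s by rewrite divr_gt0 // mulr_gt0 // (ltr0Sn _ 1).
have Bsh := Brho_scale s Bh.
have := Hd _ Bsh.
have Hw : wnorm rho ((fun _ => 0) \- (fun y => s * h y)) < d.
  apply: (@le_lt_trans _ _ (d / 2)); last first.
    by rewrite ltr_pdivrMr ?(ltr0Sn _ 1) // ltr_pMr // ltr1n.
  apply: wnorm_le; first by rewrite divr_ge0 // ltW.
  move=> y; rewrite /= sub0r normrN normrM (ger0_norm (ltW s0)) ler_pdivrMr ?rpos //.
  apply: le_trans (ler_wpM2l (ltW s0) (Hh y)) _.
  rewrite le_eqVlt; apply/orP; left; apply/eqP; rewrite /s; field.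
  by rewrite gt_eqF.
move=> /(_ Hw); rewrite PZ // P0 => Hw2.
have wb : wbounded rho ((fun _ => 0) \- (fun y => s * P h y)).
  apply: wb_sub; first exact: Brho0.1.
  by have := (PB Bsh).1; rewrite PZ.
have := wnorm_pt x wb; rewrite /= sub0r normrN normrM (ger0_norm (ltW s0)) => h1.
have h2 : s * `|P h x| <= rho x.
  apply: le_trans h1 _; rewrite -[X in _ <= X]mul1r; apply: ler_wpM2r; [exact: ltW (rpos x) | exact: ltW].
have -> : 2 / d * b * rho x = rho x / s.
  rewrite /s invf_div; field; rewrite gt_eqF //.
by rewrite ler_pdivlMr // mulrC.
Qed.


Lemma point_Cb A (A0 : 0 < A) (HA : forall h b, Brho rho h -> 0 < b ->
  (forall y, `|h y| <= b * rho y) -> forall x, `|P h x| <= A * b * rho x) x :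
  exists y, sublevel rho (2 * A * rho x) y /\ forall g, Cb g -> P g x = g y.
Proof.
set R1 := 2 * A * rho x.
have R10 : 0 < R1 by rewrite /R1 !mulr_gt0 ?rpos // (ltr0Sn _ 1).
have [m m0 Hm] := rho_inf.
set K := sublevel rho R1.
apply: contrapT => Hno.
have HG : forall y, exists g : E -> R, K y -> Cb g /\ P g x != g y.
  move=> y; case: (pselect (K y)) => Ky; last by exists (fun _ => 0).
  apply: contrapT => nH; apply: Hno; exists y; split => // g cg.
  apply: contrapT => ne; apply: nH; exists g => _; split => //; exact/eqP.
have /choice [G HGy] := HG.
pose a y := P (G y) x.
pose c y := (pi / 2) / (G y y - a y).
pose w y z := cos (c y * (G y z - a y)) ^+ 2.
set q := m / R1.
have q0 : 0 < q by rewrite divr_gt0.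
have wy y : K y -> w y y = 0.
  move=> Ky; have [_ ne] := HGy y Ky.
  have ne' : G y y - a y != 0 by rewrite subr_eq0 eq_sym.
  by rewrite /w /c divfK // cos_pihalf expr0n.
have w01 y z : 0 <= w y z <= 1.
  rewrite /w sqr_ge0 /= cos2sin2 lerBlDr lerDl; exact: sqr_ge0.
have cw y : K y -> continuous (w y).
  move=> Ky z; apply: (@continuous_comp _ _ _ (G y) (fun t => cos (c y * (t - a y)) ^+ 2) z).
    by case: (HGy y Ky) => -[cg _] _; apply: cg.
  exact: cont_fac.
pose Ffin := fun (Q : set (seq E)) => exists l : seq E, forall D, {subset l <= D} -> Q D.
have FF : Filter Ffin.
  split.
  - by exists [::].
  - move=> Q1 Q2 [l1 H1] [l2 H2]; exists (l1 ++ l2) => D sD; split.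
      by apply: H1 => z zl; apply: sD; rewrite mem_cat zl.
    by apply: H2 => z zl; apply: sD; rewrite mem_cat zl orbT.
  - by move=> Q1 Q2 sQ [l H]; exists l => D sD; apply: sQ; apply: H.
have /compact_near_coveringP cK := @Kcpt R1 (ltW R10).
have := cK (seq E) Ffin (fun D z => exists2 d, d \in D & K d /\ w d z < q) FF.
case.
  move=> z Kz.
  exists ([set z' | w z z' < q], [set D : seq E | z \in D]) => /=.
    split; last by exists [:: z] => D sD; apply: sD; rewrite inE.
    apply: open_nbhs_nbhs; split; last by rewrite /= wy.
    apply: (open_comp (f := w z) (D := [set t | t < q])); last exact: open_lt.
    by move=> t _; apply: cw.
  by move=> [z' D] /= [h1 h2]; exists z.
move=> l Hl; have HK := Hl l (fun _ h => h).
set ys := [seq d <- l | asbool (K d)].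
set N := size ys.
pose yi (i : 'I_N) := nth x ys i.
have Kyi i : K (yi i).
  have := mem_nth x (ltn_ord i); rewrite -/(yi i) mem_filter => /andP [/asboolP] //.
pose fs (i : 'I_N) := G (yi i).
pose Phi (t : 'rV[R]_N) := \prod_(i < N) cos (c (yi i) * (t ord0 i - a (yi i))) ^+ 2.
have sPhi : smooth_fun Phi by move=> k; apply: Ck_prod => i; apply: Ck_cosfac.
have Phi01 t : 0 <= Phi t <= 1.
  apply/andP; split; first by apply: prodr_ge0 => i _; exact: sqr_ge0.
  apply: prodr_ile1 => i _; rewrite sqr_ge0 /= cos2sin2 lerBlDr lerDl; exact: sqr_ge0.
have bPhi : Defs.bounded_fun Phi.
  by exists 1 => t; have /andP [h0 h1] := Phi01 t; rewrite ger0_norm.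
have Bfs i : Brho rho (fs i) by apply: Cb_Brho; case: (HGy _ (Kyi i)).
case: Ph => _ Psm.
have Hsm := Psm N Phi sPhi bPhi fs Bfs.
pose h z := Phi (\row_i fs i z).
have Ph1 : P h x = 1.
  rewrite /h Hsm /Phi; apply: big1 => i _; rewrite !mxE subrr mulr0 cos0 expr1n //.
have Bh : Brho rho h.
  apply: Cb_Brho; split; last by exists 1 => z; have /andP [h0 h1] := Phi01 (\row_i fs i z); rewrite ger0_norm.
  move=> z; apply: (@continuous_comp _ _ _ (fun z => \row_i fs i z) Phi z).
    by apply: row_cont => i; case: (HGy _ (Kyi i)) => -[].
  exact: (sPhi 0%N).
have bnd z : `|h z| <= R1^-1 * rho z.
  have /andP [h0 h1] := Phi01 (\row_i fs i z).
  rewrite ger0_norm //.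
  have [Kz|nKz] := leP (rho z) R1; last first.
    apply: le_trans h1 _; rewrite ler_pdivlMl // mulr1; exact: ltW.
  have [d dl [Kd wdz]] := HK z Kz.
  have dys : d \in ys by rewrite mem_filter dl andbT; apply/asboolP.
  have jlt : (index d ys < N)%N by rewrite index_mem.
  pose J := Ordinal jlt.
  have yJ : yi J = d by rewrite /yi /= nth_index.
  rewrite /h /Phi (bigD1 J) //= !mxE.
  have -> : fs J z = G d z by rewrite /fs yJ.
  rewrite yJ.
  have r1 : \prod_(i < N | i != J) cos (c (yi i) * ((\row_i0 fs i0 z) ord0 i - a (yi i))) ^+ 2 <= 1.
    apply: prodr_ile1 => i _; rewrite sqr_ge0 /= cos2sin2 lerBlDr lerDl; exact: sqr_ge0.
  have r0 : 0 <= \prod_(i < N | i != J) cos (c (yi i) * ((\row_i0 fs i0 z) ord0 i - a (yi i))) ^+ 2.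
    by apply: prodr_ge0 => i _; exact: sqr_ge0.
  have w0 : 0 <= w d z by have /andP [] := w01 d z.
  apply: le_trans (ler_wpM2l w0 r1) _; rewrite mulr1.
  apply: ltW; apply: lt_le_trans wdz _.
  by rewrite /q mulrC ler_wpM2l ?Hm // invr_ge0 ltW.
have iR : 0 < R1^-1 by rewrite invr_gt0.
have := HA h (R1^-1) Bh iR bnd x.
rewrite Ph1 normr1 /R1.
have -> : A * (2 * A * rho x)^-1 * rho x = 2^-1.
  field; rewrite ?gt_eqF ?rpos //.
rewrite invf_ge1 ?(ltr0Sn _ 1) //; lra.
Qed.


Lemma point_Brho A (A0 : 0 < A) (HA : forall h b, Brho rho h -> 0 < b ->
  (forall y, `|h y| <= b * rho y) -> forall x, `|P h x| <= A * b * rho x) x :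
  exists y, rho y <= 2 * A * rho x /\ forall f, Brho rho f -> P f x = f y.
Proof.
have [y [Ky Hy]] := point_Cb A0 HA x.
exists y; split => // f Bf.
set C := A * rho x + rho y.
have C0 : 0 < C by rewrite /C addr_gt0 ?mulr_gt0 ?rpos.
have Heta eta : 0 < eta -> `|P f x - f y| <= eta * C.
  move=> eta0; have [g [cg [wg hg]]] := Bf.2 eta eta0.
  have Bg := Cb_Brho cg.
  have BD := Brho_lin (-1) Bg Bf.
  have PD := Plin (-1) Bg Bf.
  have bD z : `|-1 * g z + f z| <= eta * rho z.
    have -> : -1 * g z + f z = (f \- g) z by rewrite /= mulN1r addrC.
    apply: le_trans (wnorm_pt z (wb_sub Bf.1 wg)) _.
    by rewrite ler_wpM2r ?ltW ?rpos.
  have := HA _ eta BD eta0 bD x; rewrite PD Hy // => h1.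
  have := bD y => h2.
  have -> : P f x - f y = (-1 * g y + P f x) + (- (-1 * g y + f y)) by ring.
  apply: le_trans (ler_normD _ _) _; rewrite normrN.
  have -> : eta * C = A * eta * rho x + eta * rho y by rewrite /C; ring.
  exact: lerD.
apply/eqP; rewrite -subr_eq0 -normr_eq0; apply/eqP.
apply: contrapT => ne.
have u0 : 0 < `|P f x - f y| by rewrite lt_def normr_ge0 andbT; apply/eqP.
have := Heta (`|P f x - f y| / (2 * C)) (divr_gt0 u0 (mulr_gt0 (ltr0Sn _ 1) C0)).
have -> : `|P f x - f y| / (2 * C) * C = `|P f x - f y| / 2 by field; rewrite gt_eqF.
lra.
Qed.


Lemma hom_rep : exists psi, represents rho P psi.
Proof.
have [A A0 HA] := Pbound.
have /choice [psi Hpsi] := fun x => point_Brho A0 HA x.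
have Hrep f : Brho rho f -> P f = f \o psi.
  by move=> Bf; apply/funext => z; exact: (Hpsi z).2 f Bf.
exists psi; split; last split; last exact: Hrep.
- move=> r r0; apply/subspace_continuousP => x Kx U HU.
  move: HU; rewrite nbhsE => -[V [oV Vx] VU].
  have cV : closed (~` V) by rewrite -openC setCK.
  have [u [cu ux u1 u01]] := separate_closed cV (a := psi x) (fun h => h Vx).
  have Bu := Cb_Brho cu.
  have hc := (subspace_continuousP _ _).1 (Brho_cont (PB Bu) r0) x Kx.
  have h2 : 0 < (2 : R)^-1 by rewrite invr_gt0 (ltr0Sn _ 1).
  have := (@cvgrPdist_lt _ _ _ _ (within_filter _ _) _ _).1 hc _ h2.
  rewrite Hrep //= /from_subspace /= => /(_ (nbhs_filter x)).
  apply: filterS => z /= hz; apply: VU; apply: contrapT => nVz.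
  move: hz; rewrite ux sub0r u1 // normrN normr1 => h; have : (2:R)^-1 < 1 by rewrite invf_lt1 ?(ltr0Sn _ 1) // ltr1n.
  move=> h3; have := lt_trans h h3; by rewrite ltxx.
- exists (2 * A) => _ [z _ <-]; rewrite ler_pdivrMr ?rpos //; exact: (Hpsi z).1.
Qed.

End Forward.

End Main.

Unset Implicit Arguments.
Close Scope ring_scope.
Close Scope classical_set_scope.

Theorem mainTheorem14 (R : realType) (E : topologicalType) (rho : E -> R)
    (P : (E -> R) -> (E -> R)) :
  weighted_space rho ->
  (forall f, Brho rho f -> Brho rho (P f)) ->
  (smooth_op_alg_hom rho P <-> exists psi : E -> E, represents rho P psi) /\
  (forall psi1 psi2 : E -> E,
     represents rho P psi1 -> represents rho P psi2 -> psi1 = psi2).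
Proof.
move=> hw PB; split.
  split; first by move=> Ph; exact: (hom_rep hw PB Ph).
  by case=> psi rep; exact: (rep_hom hw PB rep).
move=> psi1 psi2 [_ [_ H1]] [_ [_ H2]]; exact: (uniq_psi hw H1 H2).
Qed.
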